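(* Let $\mathbb{F}$ be a field of characteristic $p$, $\mathbb{E}$ an extension field, $f\in\mathbb{F}[x]$, and let $M\le\mathbb{E}^*$ be an automatically non-standard $f$-subgroup of size $m$. Let $L$ be a finite subgroup of $\mathbb{E}^*$ with $M\le L$, and let $k=|L|/|M|$. Then $L$ is an automatically non-standard $g$-subgroup for $g(x)=f(x^k)$.
   Context: $\phi_{p,m}$ is the $m$th cyclotomic polynomial reduced mod $p$ (if $p>0$); for $\gcd(m,p)=1$ its zeros are the primitive $m$th roots of unity. An $f$-sequence is a two-way infinite sequence with $f(\sigma)s=0$, $(\sigma s)_n=s_{n+1}$. Definition: for $m>1$ with $\gcd(m,p)=1$ if $p>0$, if $f\in\mathbb{F}[x]$ divides $(x^m-1)/((x-1)\phi_{p,m}(x))$ and an $f$-sequence $s$ of period $m$ (over an extension of $\mathbb{F}$) has $M=\{s_0,\ldots,s_{m-1}\}$ a subgroup of size $m$, then $M$ is an automatically non-standard $f$-subgroup. *)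

(* Defs.v *)
From HB Require Import structures.
From mathcomp Require Import all_boot all_order all_algebra.
From mathcomp Require Import all_field.
Set Implicit Arguments. Unset Strict Implicit. Unset Printing Implicit Defensive.
Import Order.TTheory GRing.Theory Num.Theory.
Local Open Scope ring_scope.

Definition char_is (F : fieldType) (p : nat) : Prop :=
  if p == 0%N then [pchar F] =i pred0 else p \in [pchar F].

(* phi_{p,m}: the m-th cyclotomic polynomial (over Z) reduced into F;
   since F has characteristic p, this is the reduction mod p viewed in F[x]. *)
Definition phi_pm (F : fieldType) (m : nat) : {poly F} :=
  map_poly (fun z : int => z%:~R) 'Phi_m.

(* s is an f-sequence: f(sigma) s = 0, with (sigma s)_n = s_{n+1};
   the coefficients of f in F are mapped into E by the field embedding emb. *)
Definition f_sequence (F E : fieldType) (emb : {rmorphism F -> E})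
    (f : {poly F}) (s : int -> E) : Prop :=
  forall n : int, \sum_(i < size f) emb f`_i * s (n + (i : nat)%:Z) = 0.

(* M (given as a duplicate-free list of its elements) is a subgroup of E^* *)
Definition units_subgroup (E : fieldType) (M : seq E) : Prop :=
  [/\ uniq M, 0 \notin M, 1 \in M,
      {in M &, forall x y, x * y \in M} & {in M, forall x, x^-1 \in M}].

Definition ans_subgroup (p : nat) (F E : fieldType) (emb : {rmorphism F -> E})
    (f : {poly F}) (M : seq E) : Prop :=
  let m := size M in
  [/\ (1 < m)%N,
      (0 < p)%N -> coprime m p,
      f %| ('X^m - 1) %/ (('X - 1) * phi_pm F m),
      units_subgroup M &
      exists s : int -> E,
        [/\ f_sequence emb f s,
            (forall n : int, s (n + m%:Z) = s n) &
            M =i [seq s (i%:Z) | i <- iota 0 m]]].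

(* Main.v *)
Require Import Defs.
From HB Require Import structures.
From mathcomp Require Import all_boot all_order all_algebra.
From mathcomp Require Import all_field.
From mathcomp Require Import zify ring.
Import GRing.Theory.
Local Open Scope ring_scope.

Lemma Phi_comp_int (m k : nat) : (0 < m)%N -> (0 < k)%N ->
  exists Q : {poly int}, 'Phi_m \Po 'X^k = 'Phi_(k * m) * Q.
Proof.
move=> m0 k0; have n0 : (0 < k * m)%N by rewrite muln_gt0 k0 m0.
have [z pz] := C_prim_root_exists n0.
set G := 'Phi_m \Po 'X^k; set D := 'Phi_(k * m).
have mD : D \is monic by apply: Cyclotomic_monic.
have eq := Pdiv.Idomain.divp_eq G D.
rewrite (monicP mD) expr1n scale1r in eq.
exists (G %/ D).
suff r0: G %% D = 0 by rewrite {1}eq r0 addr0 mulrC.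
have pzk : m.-primitive_root (z ^+ k).
  have := dvdn_prim_root pz (dvdn_mull k (dvdnn m)).
  by rewrite mulnK.
have dv : map_poly (intr : int -> algC) D %| map_poly intr G.
  rewrite /G map_comp_poly map_polyXn (Cintr_Cyclotomic pz) (Cintr_Cyclotomic pzk).
  rewrite /cyclotomic -big_filter.
  rewrite -(big_map (fun i : 'I_(k * m) => z ^+ i) xpredT (fun x => 'X - x%:P)).
  apply: uniq_roots_dvdp.
    apply/allP => x /mapP [i]; rewrite mem_filter => /andP [ci _] ->.
    rewrite /root horner_comp hornerXn -/(root _ _) (root_cyclotomic pzk).
    have pzi : (k * m).-primitive_root (z ^+ i) by rewrite prim_root_exp_coprime.
    have := dvdn_prim_root pzi (dvdn_mull k (dvdnn m)).
    by rewrite mulnK.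
  rewrite uniq_rootsE map_inj_in_uniq ?filter_uniq ?index_enum_uniq //.
  move=> i j _ _ /eqP; rewrite (eq_prim_root_expr pz) !modn_small //.
  by move/eqP/val_inj.
have : map_poly (intr : int -> algC) G = map_poly intr (G %/ D) * map_poly intr D + map_poly intr (G %% D).
  by rewrite {1}eq rmorphD rmorphM.
move=> eqm; rewrite eqm dvdp_addr ?dvdp_mull // in dv.
have sz : (size (map_poly (intr : int -> algC) (G %% D)) < size (map_poly (intr : int -> algC) D))%N.
  rewrite !size_map_inj_poly ?rmorph0 //; try exact: intr_inj.
  by rewrite Pdiv.Idomain.ltn_modp monic_neq0.
apply/eqP; rewrite -size_poly_eq0 -(size_map_inj_poly (@intr_inj algC)) ?rmorph0 // size_poly_eq0.
apply/negPn/negP => nz.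
by have := dvdp_leq nz dv; rewrite leqNgt sz.
Qed.

Lemma phi_pmE (F : fieldType) m : phi_pm F m = map_poly intr 'Phi_m.
Proof. by []. Qed.

Lemma Phi1 : 'Phi_1 = 'X - 1.
Proof. by rewrite -[RHS](prod_Cyclotomic (isT : (0 < 1)%N)) big_seq1. Qed.

Lemma cyc_dvd (F : fieldType) m : (1 < m)%N ->
  ('X - 1) * phi_pm F m %| 'X^m - 1.
Proof.
move=> m1; have m0 : (0 < m)%N by apply: ltnW.
have e := prod_Cyclotomic m0.
rewrite (big_rem m) -?dvdn_divisors // in e.
rewrite (big_rem 1%N) /= in e; last first.
  by rewrite mem_rem_uniq ?divisors_uniq // inE /= -dvdn_divisors // dvd1n andbT neq_ltn m1.
have -> : ('X^m - 1 : {poly F}) = map_poly intr ('X^m - 1 : {poly int}).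
  by rewrite rmorphB /= map_polyXn rmorph1.
rewrite -e Phi1 !rmorphM /= phi_pmE rmorphB /= map_polyX rmorph1.
by rewrite mulrCA dvdp_mul2l ?dvdp_mulr // -size_poly_eq0 size_XsubC.
Qed.

Lemma sum_dvd (E : fieldType) (k a : nat) (c : nat -> E) : (0 < k)%N ->
  \sum_(i < a * k) (if (k %| i)%N then c i else 0) = \sum_(j < a) c (j * k)%N.
Proof.
case: k => // k _; elim: a => [|a IH]; first by rewrite mul0n !big_ord0.
rewrite mulSnr big_split_ord /= IH [RHS]big_ord_recr /=; congr (_ + _).
rewrite big_ord_recl /= addn0 dvdn_mull // big1 ?addr0 //.
move=> i _; rewrite /bump /= add1n.
have -> : (k.+1 %| a * k.+1 + i.+1)%N = false.
  rewrite dvdn_addr ?dvdn_mull //; apply/negbTE/negP => /dvdn_leq.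
  by move=> /(_ isT); rewrite ltnS leqNgt ltn_ord.
by [].
Qed.

Lemma sum_widen (F E : fieldType) (emb : {rmorphism F -> E}) (p : {poly F})
  (T : nat -> E) B : (size p <= B)%N ->
  \sum_(i < size p) emb p`_i * T i = \sum_(i < B) emb p`_i * T i.
Proof.
move=> sB; rewrite (big_ord_widen _ (fun i => emb p`_i * T i) sB) big_mkcond /=.
apply: eq_bigr => i _; case: ifP => // /negbT; rewrite -leqNgt => hi.
by rewrite nth_default // rmorph0 mul0r.
Qed.

Lemma sum_comp (F E : fieldType) (emb : {rmorphism F -> E}) (h : {poly F}) k
  (T : nat -> E) : (0 < k)%N ->
  \sum_(i < size (h \Po 'X^k)) emb (h \Po 'X^k)`_i * T i
  = \sum_(j < size h) emb h`_j * T (j * k)%N.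
Proof.
move=> k0; rewrite (@sum_widen _ _ _ _ _ (size h * k)%N); last first.
  by rewrite comp_poly_Xn // size_poly.
rewrite (eq_bigr (fun i : 'I_(size h * k) => if (k %| i)%N then emb h`_(i %/ k) * T i else 0)).
  by rewrite (@sum_dvd _ _ _ (fun i => emb h`_(i %/ k) * T i)) //; apply: eq_bigr => j _; rewrite mulnK.
by move=> i _; rewrite coef_comp_poly_Xn //; case: ifP => _ //; rewrite rmorph0 mul0r.
Qed.

Lemma cosets (E : fieldType) (M S : seq E) : units_subgroup M ->
  uniq S -> 0 \notin S -> {in S & M, forall x y, x * y \in S} ->
  exists R : seq E, uniq [seq a * b | a <- R, b <- M] /\
                    S =i [seq a * b | a <- R, b <- M].
Proof.
case=> uM M0 M1 MM MV.
move: (leqnn (size S)); move: {2}(size S) => N.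
elim: N S => [|N IH] S.
  rewrite leqn0 size_eq0 => /eqP -> _ _ _; by exists [::].
case: S => [|a S0] szS uS S0n cS.
  by exists [::].
set S := a :: S0.
have aS : a \in S by rewrite inE eqxx.
have a0 : a != 0 by apply: contraNneq S0n => <-.
set A := [seq a * b | b <- M].
set S' := [seq x <- S | x \notin A].
have aA : a \in A by apply/mapP; exists 1; rewrite ?mulr1.
have szS' : (size S' <= N)%N.
  have : (size S' < size S)%N.
    rewrite size_filter -[X in (_ < X)%N](count_predC (mem A)).
    rewrite -[X in (X < _)%N]add0n ltn_add2r -has_count.
    apply/hasP; exists a => //.
  by move=> h; rewrite -ltnS (leq_trans h).
have [R' [uR' eR']] : exists R : seq E, uniq [seq a * b | a <- R, b <- M] /\
                    S' =i [seq a * b | a <- R, b <- M].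
  apply: IH => //; first by rewrite filter_uniq.
    by rewrite mem_filter negb_and S0n orbT.
  move=> x y; rewrite !mem_filter => /andP [xA xS] yM.
  rewrite cS // andbT; apply: contra xA => /mapP [b bM e].
  have y0 : y != 0 by apply: contraNneq M0 => <-.
  apply/mapP; exists (b * y^-1); first by rewrite MM ?MV.
  by rewrite mulrA -e mulrK // unitfE.
exists (a :: R'); rewrite /= cat_uniq uR'; split.
  apply/and3P; split => //.
    rewrite map_inj_uniq // => x y /mulfI; exact.
  apply/hasP => -[x]; rewrite -eR' mem_filter => /andP [xA _] xA'.
  by rewrite xA' in xA.
move=> x; rewrite mem_cat -eR' mem_filter.
case xA : (x \in A) => /= //.
by case/mapP: xA => b bM ->; rewrite cS.
Qed.

Lemma prod_const_seq (E : fieldType) (x : E) (L : seq E) :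
  \prod_(y <- L) x = x ^+ size L.
Proof. by elim: L => [|y L IH]; rewrite ?big_nil ?big_cons ?IH ?exprS. Qed.

Lemma powL (E : fieldType) (L : seq E) x : units_subgroup L -> x \in L ->
  x ^+ size L = 1.
Proof.
case=> uL L0 L1 LL LV xL.
have x0 : x != 0 by apply: contraNneq L0 => <-.
have [_ eqL] : (size [seq x * y | y <- L] = size L) * ([seq x * y | y <- L] =i L).
  apply: uniq_min_size; first by rewrite map_inj_uniq // => a b /mulfI; exact.
    by move=> z /mapP [y yL ->]; rewrite LL.
  by rewrite size_map.
have pe : perm_eq L [seq x * y | y <- L].
  apply: uniq_perm.
  - exact: uL.
  - by rewrite map_inj_uniq // => a b /mulfI; exact.
  - by move=> z; rewrite eqL.
have P0 : \prod_(y <- L) y != 0.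
  by rewrite prodf_seq_neq0; apply/allP => y yL /=; apply: contraNneq L0 => <-.
apply: (mulIf P0); rewrite mul1r [RHS](perm_big _ pe) /= big_map big_split /=.
by rewrite prod_const_seq.
Qed.

Lemma coprimeL (E : fieldType) (p : nat) (L : seq E) : prime p ->
  p \in [pchar E] -> units_subgroup L -> ~~ (p %| size L)%N.
Proof.
move=> pp pc UL; have [uL L0 L1 _ _] := UL; apply/negP => /dvdnP [r e].
have r0 : (0 < r)%N.
  have : (0 < size L)%N by case: (L) L1.
  by rewrite e muln_gt0 => /andP [].
have rt : all (root ('X^r - 1)) L.
  apply/allP => x xL; rewrite /root !hornerE.
  have := @powL _ _ _ UL xL; rewrite e exprM => h.
  have : (x ^+ r - 1) ^+ p = 0.
    by rewrite exprDn_pchar ?pnatE // exprNn_pchar ?pnatE // expr1n h subrr.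
  by move/eqP; rewrite expf_eq0 => /andP [_ /eqP ->].
have := max_poly_roots _ rt uL.
rewrite size_Xn_sub_1 // -size_poly_eq0 size_Xn_sub_1 // => /(_ isT).
have p2 := prime_gt1 pp.
rewrite e ltnS; nia.
Qed.

Lemma phiF_comp (F : fieldType) (m k : nat) : (0 < m)%N -> (0 < k)%N ->
  exists Q : {poly F}, phi_pm F m \Po 'X^k = phi_pm F (k * m) * Q.
Proof.
move=> m0 k0; have [Q eQ] := @Phi_comp_int _ _ m0 k0.
exists (map_poly intr Q).
by rewrite !phi_pmE -(map_polyXn (intr : int -> F)) -map_comp_poly eQ rmorphM.
Qed.

Lemma compXn1 (F : fieldType) (m k : nat) :
  ('X^m - 1 : {poly F}) \Po 'X^k = 'X^(k * m) - 1.
Proof.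
by rewrite comp_polyB comp_Xn_poly -exprM mulnC -polyC1 comp_polyC.
Qed.

Theorem mainTheorem12 (p : nat) (F E : fieldType) (emb : {rmorphism F -> E})
    (f : {poly F}) (M L : seq E) :
  char_is F p ->
  ans_subgroup p emb f M ->
  units_subgroup L ->
  {subset M <= L} ->
  ans_subgroup p emb (f \Po 'X^(size L %/ size M)) L.
Proof.
move=> hc [m1 cop dv UM [s [fs per Ms]]] UL sub.
have [uL L0 L1 LL LV] := UL.
have [uM M0 M1 MM MV] := UM.
have [R [uRM eLR]] := @cosets _ _ _ UM uL L0 (fun x y xL yM => LL x y xL (sub y yM)).
set m := size M in m1 cop dv per Ms *.
set n := size L.
set k := size R.
have m0 : (0 < m)%N by apply: ltnW.
have nE : n = (k * m)%N.
  by rewrite -(size_allpairs (fun a b => a * b) R M); apply: perm_size; apply: uniq_perm.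
have kE : (n %/ m)%N = k by rewrite nE mulnK.
rewrite /ans_subgroup -/n kE.
have n0 : (0 < n)%N by rewrite /n; case: (L) L1.
have k0 : (0 < k)%N by move: n0; rewrite nE muln_gt0 => /andP [].
split => //.
- by rewrite nE; apply: (leq_trans m1); rewrite leq_pmull.
- move=> p0; move: hc; rewrite /char_is; case: eqP => [p00|_ pF]; first by rewrite p00 in p0.
  have pE := rmorph_pchar emb pF.
  have pp := pcharf_prime pF.
  by rewrite coprime_sym prime_coprime // coprimeL.
- set g := f \Po 'X^k.
  have /divpK eA := @cyc_dvd F _ m1.
  set A := (_ %/ _) in eA dv.
  have [u eu] := dvdpP _ _ dv.
  have [Q eQ] := @phiF_comp F _ _ m0 k0.
  have : ('X - 1 : {poly F}) %| 'X^k - 1.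
    by rewrite -polyC1 dvdp_XsubCl /root !hornerE expr1n subrr.
  case/dvdpP => W eW.
  have eX : ('X^n - 1 : {poly F}) = ((u \Po 'X^k) * (W * Q)) * g * (('X - 1) * phi_pm F n).
    rewrite nE -compXn1 -eA eu !comp_polyM comp_polyB comp_polyX -polyC1 comp_polyC polyC1 eQ eW.
    rewrite /g; ring.
  rewrite eX mulpK; first by apply: dvdp_mull.
  rewrite mulf_neq0 // -?size_poly_eq0 ?size_XsubC //.
  by rewrite size_poly_eq0 monic_neq0 // phi_pmE monic_map // Cyclotomic_monic.
- pose s' (N : int) := nth 0 R `|(N %% k)%Z|%N * s (N %/ k)%Z.
  have kz : (k%:Z != 0) by rewrite eqz_nat -lt0n.
  have key : forall (q : int) (r : nat), (r < k)%N ->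
      s' (q * k%:Z + r%:Z) = nth 0 R r * s q.
    move=> q r rk; rewrite /s' divzMDl // modzMDl divz_nat modz_nat.
    by rewrite divn_small // modn_small // addr0.
  have dec : forall N : int, exists q : int, exists2 r : nat, (r < k)%N & N = q * k%:Z + r%:Z.
    move=> N; exists (N %/ k)%Z; exists `|(N %% k)%Z|%N.
      by rewrite -ltz_nat gez0_abs ?modz_ge0 // ltz_pmod // ltz_nat.
    by rewrite gez0_abs ?modz_ge0 // -divz_eq.
  exists s'; split.
  + move=> N; have [q [r rk ->]] := dec N.
    rewrite (@sum_comp F E emb f k (fun i => s' (q * k%:Z + r%:Z + i%:Z)) k0).
    rewrite (eq_bigr (fun j : 'I_(size f) => nth 0 R r * (emb f`_j * s (q + (j : nat)%:Z)))).
      by rewrite -mulr_sumr fs mulr0.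
    move=> j _.
    have -> : q * k%:Z + r%:Z + ((j * k)%N)%:Z = (q + (j : nat)%:Z) * k%:Z + r%:Z.
      by rewrite PoszM; ring.
    by rewrite key // mulrCA.
  + move=> N; have [q [r rk ->]] := dec N.
    have -> : q * k%:Z + r%:Z + n%:Z = (q + m%:Z) * k%:Z + r%:Z.
      by rewrite nE PoszM; ring.
    by rewrite !key // per.
  + move=> x; rewrite eLR; apply/idP/idP.
    * case/allpairsP => -[a b] /= [aR bM ->].
      move: bM; rewrite Ms => /mapP [i]; rewrite mem_iota add0n => im ->.
      apply/mapP; exists (i * k + index a R)%N.
        rewrite mem_iota add0n nE.
        have := index_mem a R; rewrite aR -/k => ik; nia.
      by rewrite PoszD PoszM key ?index_mem // nth_index.
    * case/mapP => i; rewrite mem_iota add0n => ilt ->.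
      rewrite (divn_eq i k) PoszD PoszM key ?ltn_pmod //.
      apply: allpairs_f; first by rewrite mem_nth ?ltn_pmod.
      rewrite Ms; apply/mapP; exists (i %/ k)%N => //.
      by rewrite mem_iota add0n ltn_divLR // mulnC -nE.
Qed.
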